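(* Let $\vartheta\in\{p,bp,r\}$. Then both of the following inclusions hold and are strict (proper): (i) $\mathcal{H}_{\vartheta}\subset\mathcal{BV}$; (ii) $\mathcal{H}_{\vartheta}\subset\mathcal{BV}_{\vartheta 0}$.
   Context: $\Omega$ denotes the set of all complex double sequences $x=(x_{kl})_{k,l\ge 1}$. A double sequence is $p$-convergent (Pringsheim convergent) to $L$ if for every $\varepsilon>0$ there is $N$ with $|x_{kl}-L|<\varepsilon$ for all $k,l\ge N$; $bp$-convergent if bounded and $p$-convergent; $r$-convergent (regularly convergent) if $p$-convergent and every row and every column converges. For $\vartheta\in\{p,bp,r\}$, $\mathcal{C}_{\vartheta 0}$ is the set of double sequences $\vartheta$-convergent to $0$. $\Delta x_{kl}=x_{kl}-x_{k+1,l}-x_{k,l+1}+x_{k+1,l+1}$, and $\mathcal{H}_{\vartheta}=\{x\in\Omega:\sum_{k,l=1}^{\infty}|kl\,\Delta x_{kl}|<\infty\}\cap\mathcal{C}_{\vartheta 0}$. $\mathcal{BV}=\{x\in\Omega:\sum_{k,l=1}^{\infty}|\Delta x_{kl}|<\infty\}$ is the space of double sequences of bounded variation, and $\mathcal{BV}_{\vartheta 0}=\mathcal{BV}\cap\mathcal{C}_{\vartheta 0}$. *)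

(* Defs.v *)
From Stdlib Require Import Reals.
From Coquelicot Require Import Coquelicot.
Open Scope R_scope.

(* A complex double sequence (x_{kl})_{k,l>=1}.  We index by nat starting at 0:
   [x k l] stands for x_{k+1,l+1}. *)
Definition dseq := nat -> nat -> C.

Definition Delta (x : dseq) (k l : nat) : C :=
  (x k l - x (S k) l - x k (S l) + x (S k) (S l))%C.

Definition p_conv (x : dseq) (L : C) : Prop :=
  forall eps : R, 0 < eps -> exists N : nat,
    forall k l : nat, (N <= k)%nat -> (N <= l)%nat -> Cmod (x k l - L)%C < eps.

Definition dbounded (x : dseq) : Prop :=
  exists M : R, forall k l : nat, Cmod (x k l) <= M.

Definition seq_conv (u : nat -> C) : Prop :=
  exists a : C, forall eps : R, 0 < eps -> exists N : nat,
    forall n : nat, (N <= n)%nat -> Cmod (u n - a)%C < eps.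

Definition r_conv (x : dseq) (L : C) : Prop :=
  p_conv x L /\ (forall k, seq_conv (fun l => x k l)) /\ (forall l, seq_conv (fun k => x k l)).

Inductive mode := Mp | Mbp | Mr.

Definition Cth0 (th : mode) (x : dseq) : Prop :=
  match th with
  | Mp => p_conv x 0%C
  | Mbp => dbounded x /\ p_conv x 0%C
  | Mr => r_conv x 0%C
  end.

(* sum_{k,l=1}^oo a_{kl} < oo for nonnegative a: the square partial sums are bounded *)
Definition dsum_finite (a : nat -> nat -> R) : Prop :=
  exists M : R, forall N : nat,
    sum_f_R0 (fun k => sum_f_R0 (fun l => a k l) N) N <= M.

(* H_theta: sum |k l Delta x_{kl}| < oo, and x in C_{theta 0}.
   With the shift, the weight of [Delta x k l] is (k+1)(l+1). *)
Definition Hth (th : mode) (x : dseq) : Prop :=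
  dsum_finite (fun k l => Cmod (RtoC (INR ((S k) * (S l))) * Delta x k l)%C) /\ Cth0 th x.

Definition BV (x : dseq) : Prop :=
  dsum_finite (fun k l => Cmod (Delta x k l)).

Definition BV0 (th : mode) (x : dseq) : Prop := BV x /\ Cth0 th x.

(* Main.v *)
Require Import Defs.
From Stdlib Require Import Reals Lra Lia.
From Coquelicot Require Import Coquelicot.
Open Scope R_scope.

Definition tt (m : nat) : R := / INR (S m).
Definition ex : dseq := fun k l => RtoC (tt (Nat.max k l)).

Lemma tt_pos m : 0 < tt m.
Proof. unfold tt. apply Rinv_0_lt_compat. apply lt_0_INR. lia. Qed.

Lemma tt_dec m : tt (S m) <= tt m.
Proof.
  unfold tt. apply Rinv_le_contravar. apply lt_0_INR; lia. apply le_INR; lia.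
Qed.

Lemma Delta_ex k l :
  Defs.Delta ex k l = RtoC (if Nat.eq_dec k l then tt k - tt (S k) else 0).
Proof.
  unfold Defs.Delta, ex.
  rewrite <- !RtoC_minus, <- RtoC_plus. f_equal.
  destruct (Nat.eq_dec k l) as [->|Hne].
  - rewrite !Nat.max_id, (Nat.max_l (S l) l), (Nat.max_r l (S l)) by lia. ring.
  - destruct (Nat.lt_ge_cases k l).
    + rewrite (Nat.max_r k l), (Nat.max_r (S k) l), (Nat.max_r k (S l)),
        (Nat.max_r (S k) (S l)) by lia. ring.
    + rewrite (Nat.max_l k l), (Nat.max_l (S k) l), (Nat.max_l k (S l)),
        (Nat.max_l (S k) (S l)) by lia. ring.
Qed.

Lemma sum_single (f : nat -> R) k N :
  (forall l, l <> k -> f l = 0) ->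
  sum_f_R0 f N = if Nat.leb k N then f k else 0.
Proof.
  intros H. induction N as [|N IH].
  - simpl. destruct k. reflexivity. apply H. lia.
  - simpl sum_f_R0. rewrite IH.
    destruct (Nat.leb k N) eqn:E1; destruct (Nat.leb k (S N)) eqn:E2;
      apply Nat.leb_le in E1 || apply Nat.leb_gt in E1;
      apply Nat.leb_le in E2 || apply Nat.leb_gt in E2; try lia.
    + rewrite (H (S N)) by lia. ring.
    + assert (k = S N) by lia. subst. ring.
    + rewrite (H (S N)) by lia. ring.
Qed.

Lemma sum_lower (f : nat -> R) a N :
  (forall k, (k <= N)%nat -> a <= f k) -> INR (S N) * a <= sum_f_R0 f N.
Proof.
  induction N as [|N IH]; intros H.
  - simpl. specialize (H 0%nat (le_n 0)). lra.
  - simpl sum_f_R0. rewrite S_INR.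
    assert (IH' : INR (S N) * a <= sum_f_R0 f N) by (apply IH; intros k Hk; apply H; lia).
    assert (H1 : a <= f (S N)) by (apply H; lia). lra.
Qed.

Lemma sum_tele N : sum_f_R0 (fun k => tt k - tt (S k)) N = 1 - tt (S N).
Proof.
  induction N as [|N IH].
  - simpl. unfold tt. simpl. field.
  - simpl sum_f_R0. rewrite IH. ring.
Qed.

Lemma sum_le (f g : nat -> R) N : (forall k, f k <= g k) -> sum_f_R0 f N <= sum_f_R0 g N.
Proof.
  intros H. induction N; simpl; [apply H|]. specialize (H (S N)). lra.
Qed.

Lemma ex_small eps : 0 < eps -> exists N, forall k l, (N <= Nat.max k l)%nat -> Cmod (ex k l) < eps.
Proof.
  intros He. destruct (archimed_cor1 eps He) as [N [HN HN0]].
  exists N. intros k l Hkl. unfold ex. rewrite Cmod_R, Rabs_pos_eq by (left; apply tt_pos).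
  unfold tt. eapply Rle_lt_trans; [|exact HN].
  apply Rinv_le_contravar. apply lt_0_INR; lia. apply le_INR; lia.
Qed.

Lemma Cminus_0_r (z : C) : (z - 0)%C = z.
Proof. ring. Qed.

Lemma ex_C th : Cth0 th ex.
Proof.
  assert (Hp : p_conv ex 0%C).
  { intros eps He. destruct (ex_small eps He) as [N HN]. exists N. intros k l Hk Hl.
    rewrite Cminus_0_r. apply HN. lia. }
  destruct th; simpl.
  - exact Hp.
  - split; [|exact Hp]. exists 1. intros k l. unfold ex.
    rewrite Cmod_R, Rabs_pos_eq by (left; apply tt_pos). unfold tt.
    rewrite <- Rinv_1. apply Rinv_le_contravar. lra. rewrite S_INR. pose proof (pos_INR (Nat.max k l)). lra.
  - split; [exact Hp|]. split.
    + intros k. exists 0%C. intros eps He. destruct (ex_small eps He) as [N HN]. exists N.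
      intros n Hn. rewrite Cminus_0_r. apply HN. lia.
    + intros l. exists 0%C. intros eps He. destruct (ex_small eps He) as [N HN]. exists N.
      intros n Hn. rewrite Cminus_0_r. apply HN. lia.
Qed.

Lemma ex_BV : BV ex.
Proof.
  exists 1. intros N. unfold BV.
  apply Rle_trans with (sum_f_R0 (fun k => tt k - tt (S k)) N).
  - apply sum_le. intros k.
    rewrite (sum_single _ k N).
    + destruct (Nat.leb k N).
      * rewrite Delta_ex. destruct (Nat.eq_dec k k); [|congruence].
        rewrite Cmod_R, Rabs_pos_eq. lra. pose proof (tt_dec k). lra.
      * pose proof (tt_dec k). lra.
    + intros l Hl. rewrite Delta_ex. destruct (Nat.eq_dec k l); [congruence|].
      rewrite Cmod_R, Rabs_R0. reflexivity.
  - rewrite sum_tele. pose proof (tt_pos (S N)). lra.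
Qed.

Lemma ex_notH th : ~ Hth th ex.
Proof.
  intros [[M HM] _].
  destruct (archimed_cor1 (/ (2 * Rabs M + 2))) as [N [HN HN0]].
  { apply Rinv_0_lt_compat. pose proof (Rabs_pos M). lra. }
  specialize (HM N).
  assert (Hlow : INR (S N) * (1/2) <= sum_f_R0 (fun k => sum_f_R0 (fun l =>
     Cmod (RtoC (INR (S k * S l)) * Defs.Delta ex k l)%C) N) N).
  { apply sum_lower. intros k Hk.
    rewrite (sum_single _ k N).
    - destruct (Nat.leb k N) eqn:E; [|apply Nat.leb_gt in E; lia].
      rewrite Delta_ex. destruct (Nat.eq_dec k k); [|congruence].
      rewrite <- RtoC_mult, Cmod_R, mult_INR. unfold tt.
      rewrite !S_INR. pose proof (pos_INR k).
      rewrite Rabs_pos_eq.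
      + apply Rmult_le_reg_r with ((INR k + 1 + 1)).  lra.
        field_simplify; try lra.
      + field_simplify; try lra. apply Rmult_le_pos; [|left; apply Rinv_0_lt_compat]; nra.
    - intros l Hl. rewrite Delta_ex. destruct (Nat.eq_dec k l); [congruence|].
      rewrite Cmult_0_r, Cmod_0. reflexivity. }
  assert (HNpos : 0 < INR N) by (apply lt_0_INR; lia).
  assert (INR N > 2 * Rabs M + 2).
  { assert (Hp : 0 < 2 * Rabs M + 2) by (pose proof (Rabs_pos M); lra).
    apply Rinv_lt_contravar in HN; [|apply Rmult_lt_0_compat; auto; apply Rinv_0_lt_compat; auto].
    rewrite !Rinv_inv in HN. lra. }
  rewrite S_INR in Hlow. pose proof (Rle_abs M). lra.
Qed.

Lemma H_BV th x : Hth th x -> BV x.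
Proof.
  intros [[M HM] _]. exists M. intros N. eapply Rle_trans; [|apply (HM N)].
  apply sum_le. intros k. apply sum_le. intros l.
  rewrite Cmod_mult, Cmod_R, Rabs_pos_eq by apply pos_INR.
  pose proof (Cmod_ge_0 (Defs.Delta x k l)).
  assert (1 <= INR (S k * S l)). { replace 1 with (INR 1) by reflexivity. apply le_INR. nia. }
  nra.
Qed.

Theorem theorem2p3 (th : mode) :
  ((forall x : dseq, Hth th x -> BV x) /\ (exists x : dseq, BV x /\ ~ Hth th x)) /\
  ((forall x : dseq, Hth th x -> BV0 th x) /\ (exists x : dseq, BV0 th x /\ ~ Hth th x)).
Proof.
  split; split.
  - apply H_BV.
  - exists ex. split. apply ex_BV. apply ex_notH.
  - intros x Hx. split. eapply H_BV; eauto. apply Hx.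
  - exists ex. split. split. apply ex_BV. apply ex_C. apply ex_notH.
Qed.
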